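(* In the epoch setting described in the context, at least a $\frac{1}{12}$ fraction of the tuples in $S^{(1)}\times S^{(2)}\times\cdots\times S^{(\rho)}$ are $I$-covering for every $I\in\mathcal{I}$ (simultaneously).
   Context: Let $n\ge 2$ and $k\ge1$, $\Delta$ be natural numbers, $\mathcal{G}=\langle G_1,\dots,G_L\rangle$ a temporal graph (sequence of graphs on a common $n$-element vertex set $V$), and $T$ a spanning tree of its underlying graph (the union of the snapshots). A snapshot is $k$-edge-deficient w.r.t. $T$ if it contains all but at most $k$ edges of $T$. Let $N=2(n-1)$, fix a DFS tour of $T$ from a root $r$ traversing each edge twice, with cyclic vertex sequence $(v_1,\dots,v_{N+1})$, $v_{N+1}=v_1=r$, tour edges $e_q=\{v_q,v_{q+1}\}$. Circular intervals: $[\![i,j]\!]=\{i,\dots,j\}$ if $i\le j$, $\{i,\dots,N,1,\dots,j\}$ if $i>j$; $[\![i,j[\![=[\![i,j]\!]\setminus\{j\}$. Roundabout process on a sequence $H_1,\dots,H_t$ of graphs: agents $a_1,\dots,a_N$, $s_i(0)=i$; at step $\tau$, if $s_i(\tau-1)=q$ then $s_i(\tau)=(q\bmod N)+1$ if $e_q\in E(H_\tau)$, else $q$; visited states $D_i(\tau)=[\![i,s_i(\tau)]\!]$, $D_i(0)=\{i\}$; active sets $A(0)=$ all agents, and $A(\tau)$ is obtained from $A(\tau-1)$ by repeatedly removing an arbitrary agent $a_i$ with $D_i(\tau)\subseteq\bigcup D_j(\tau)$ over the other current agents, until none remains. Let $t=\lfloor N/(2k)\rfloor$ and $\rho=\lceil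 18k\ln(6k)\rceil$. Assume an initial part of $[L]$ is partitioned into $\rho$ consecutive intervals (epochs), each containing at least $\Delta+t$ snapshots that are $k$-edge-deficient w.r.t. $T$; each epoch's first $\Delta$ time steps form its repositioning part, and the rest (containing at least $t$ such snapshots) is its roundabout part. In epoch $i$, run the roundabout process for $t$ steps on the first $t$ $k$-edge-deficient snapshots of its roundabout part, let $A^{(i)}$ be the active agents after step $t$ and $S^{(i)}$ their initial states. Let $\bigcup_{i\in[\rho]}S^{(i)}=\{m_1<\dots<m_d\}$, $I_j=[\![m_j,m_{j+1}[\![$ for $j\in[d-1]$, $I_d=[\![m_d,m_1[\![$, and $\mathcal{I}=\{I_1,\dots,I_d\}$. For $I\in\mathcal{I}$, a tuple $(s_1,\dots,s_\rho)\in S^{(1)}\times\cdots\times S^{(\rho)}$ is $I$-missing if for every $i\in[\rho]$ the agent of $A^{(i)}$ with initial state $s_i$ does not visit all states of $I$ in the roundabout process of epoch $i$; it is $I$-covering if it is not $I$-missing. *)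

(* Defs.v *)
From Stdlib Require Rdefinitions Raxioms Rpower.
From HB Require Import structures.
From mathcomp Require Import all_boot.
Set Implicit Arguments. Unset Strict Implicit. Unset Printing Implicit Defensive.

Definition is_graph (V : finType) (E : {set {set V}}) : Prop :=
  forall e, e \in E -> #|e| = 2.

Definition tadj (V : finType) (T : {set {set V}}) : rel V :=
  fun x y => [set x; y] \in T.

Definition is_tree (V : finType) (T : {set {set V}}) : Prop :=
  [/\ is_graph T, (forall x y : V, connect (tadj T) x y) & #|T| = #|V|.-1].

Definition tourlen (V : finType) : nat := 2 * (#|V| - 1).

(* Tour of T from r traversing each edge twice, 0-based:
   v 0 = v N = r, tour edge e_q = {v q, v q.+1} (q < N) is an edge of T,
   and each edge of T is traversed exactly twice. *)
Definition is_dfs_tour (V : finType) (T : {set {set V}}) (r : V) (v : nat -> V) : Prop :=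
  [/\ v 0 = r, v (tourlen V) = r,
      (forall q, q < tourlen V -> [set v q; v q.+1] \in T) &
      (forall e, e \in T ->
         #|[set q : 'I_(tourlen V) | [set v q; v q.+1] == e]| = 2)].

Definition deficient (V : finType) (T : {set {set V}}) (k : nat) (E : {set {set V}}) : bool :=
  #|T :\: E| <= k.

Definition cint (N i j : nat) : {set 'I_N} :=
  [set q : 'I_N | if i <= j then (i <= q) && (q <= j) else (i <= q) || (q <= j)].
Definition cint_ho (N i j : nat) : {set 'I_N} :=
  [set q in cint N i j | nat_of_ord q != j].

Fixpoint rstate (V : finType) (N : nat) (v : nat -> V) (H : nat -> {set {set V}})
    (i tau : nat) : nat :=
  match tau with
  | 0 => i
  | tau'.+1 =>
      let q := rstate N v H i tau' in
      if [set v q; v q.+1] \in H tau'.+1 then q.+1 %% N else q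
  end.

Definition visited (V : finType) (N : nat) (v : nat -> V) (H : nat -> {set {set V}})
    (a : 'I_N) (tau : nat) : {set 'I_N} :=
  cint N a (rstate N v H a tau).

(* reduces D A A' : A' is obtained from A by repeatedly removing an (arbitrary)
   agent whose visited set is covered by those of the other current agents,
   until no such agent remains. *)
Inductive reduces (N : nat) (D : 'I_N -> {set 'I_N}) : {set 'I_N} -> {set 'I_N} -> Prop :=
| red_done (A : {set 'I_N}) :
    (forall a, a \in A -> ~~ (D a \subset \bigcup_(b in A :\ a) D b)) ->
    reduces D A A
| red_step (A : {set 'I_N}) (a : 'I_N) (A' : {set 'I_N}) :
    a \in A -> D a \subset \bigcup_(b in A :\ a) D b ->
    reduces D (A :\ a) A' -> reduces D A A'.

Definition roundabout_run (V : finType) (N : nat) (v : nat -> V)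
    (H : nat -> {set {set V}}) (t : nat) (A : nat -> {set 'I_N}) : Prop :=
  A 0 = setT /\
  forall tau, 0 < tau <= t -> reduces (fun a => visited v H a tau) (A tau.-1) (A tau).

(* epoch i (0-based) is the time interval [b i, b i.+1); its repositioning part is
   [b i, b i + Delta), its roundabout part [b i + Delta, b i.+1).
   epoch_graphs ... i tau (tau = 1, 2, ...) is the tau-th k-edge-deficient
   snapshot of the roundabout part of epoch i. *)
Definition epoch_graphs (V : finType) (T : {set {set V}}) (k : nat)
    (G : nat -> {set {set V}}) (b : nat -> nat) (Delta i : nat) : nat -> {set {set V}} :=
  fun tau => G (nth 0 [seq x <- index_iota (b i + Delta) (b i.+1) | deficient T k (G x)] tau.-1).

Definition intervals (N : nat) (M : {set 'I_N}) : seq {set 'I_N} :=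
  let ms := sort leq [seq nat_of_ord q | q <- enum M] in
  [seq cint_ho N (nth 0 ms j) (nth 0 ms (j.+1 %% size ms)) | j <- iota 0 (size ms)].

Definition is_rho (k rho : nat) : Prop :=
  let x := Rdefinitions.Rmult (Rdefinitions.Rmult (Raxioms.INR 18) (Raxioms.INR k))
                              (Rpower.ln (Raxioms.INR (6 * k))) in
  Rdefinitions.Rle x (Raxioms.INR rho) /\
  Rdefinitions.Rlt (Rdefinitions.Rminus (Raxioms.INR rho) (Raxioms.INR 1)) x.

(* Main.v *)
Require Import Defs.
From HB Require Import structures.
From mathcomp Require Import all_boot zify.
From Stdlib Require Reals Lra Lia.

Module NumR.
Import Reals Lra Lia.
Local Open Scope R_scope.

Lemma exp_nat n y : exp (INR n * y) = exp y ^ n.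
Proof.
induction n as [|n IH]. simpl. rewrite Rmult_0_l exp_0; lra.
rewrite S_INR Rmult_plus_distr_r Rmult_1_l exp_plus IH /=; ring.
Qed.

Lemma ln_le_lin y : 0 < y -> ln y <= y - 1.
Proof. intro H. have := exp_ineq1_le (ln y). rewrite exp_ln //. lra. Qed.

Lemma e_ge2 : 2 <= exp 1.
Proof. have := exp_ineq1_le 1. lra. Qed.

Lemma ln12 : ln 12 <= 11/3.
Proof.
destruct (Rle_lt_dec (ln 12) (11/3)) as [h|h]; auto.
have h1 := exp_increasing _ _ h. rewrite exp_ln in h1; [|lra].
have h2 : exp (11/3) ^ 3 = exp 1 ^ 11.
{ rewrite -exp_nat -exp_nat. f_equal. simpl. lra. }
have h3 := e_ge2.
have h4 : 2 ^ 11 <= exp 1 ^ 11 by apply pow_incr; lra.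
have h5 : exp (11/3) ^ 3 < 12 ^ 3.
{ have p := exp_pos (11/3). simpl. nra. }
simpl in *. lra.
Qed.

Lemma ln6 : 4/3 < ln 6.
Proof.
destruct (Rle_lt_dec (ln 6) (4/3)) as [h|h]; auto. exfalso.
have h1 : exp (ln 6) <= exp (4/3).
{ destruct h as [h|h]. left; apply exp_increasing; auto. rewrite h; lra. }
rewrite exp_ln in h1; [|lra].
have h2 : exp (4/3) ^ 3 = exp 1 ^ 4.
{ rewrite -exp_nat -exp_nat. f_equal. simpl. lra. }
have h3 := exp_le_3.
have h4 : exp 1 ^ 4 <= 3 ^ 4 by apply pow_incr; have := exp_pos 1; lra.
have h5 : 6 ^ 3 <= exp (4/3) ^ 3 by apply pow_incr; lra.
simpl in *. lra.
Qed.

Lemma ln_ge_third X : 12 <= X -> 1/3 <= ln X.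
Proof.
intro hX.
destruct (Rle_lt_dec (1/3) (ln X)) as [h|h]; auto.
have h1 := exp_increasing _ _ h. rewrite exp_ln in h1; [|lra].
have h2 : exp (1/3) <= exp 1.
{ left; apply exp_increasing; lra. }
have := exp_le_3. lra.
Qed.

Lemma num_k2 (k rho : nat) : (2 <= k)%coq_nat -> is_rho k rho ->
  12 * INR rho * INR (6*k) * (INR (6*k) - 1) ^ rho <= 11 * INR (6*k) ^ rho.
Proof.
intros hk [h1 _].
have hk6 : INR (6*k) = 6 * INR k by rewrite mult_INR; simpl; ring.
have h18 : INR 18 = 18 by simpl; ring.
rewrite h18 in h1.
have hP : 3 * INR (6*k) * ln (INR (6*k)) <= INR rho.
{ rewrite hk6 in h1 *. lra. }
have hX : 12 <= INR (6*k).
{ replace 12 with (INR 12) by (simpl; lra). apply le_INR. lia. }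
clear h1 hk6 h18.
set X := INR (6*k) in hP hX *. set P := INR rho in hP *.
set u := P / X. set u0 := 3 * ln X.
have hu0 : 1 <= u0 by have := ln_ge_third X hX; unfold u0; lra.
have huu0 : u0 <= u.
{ unfold u, u0. apply (Rmult_le_reg_r X); [lra|]. field_simplify; lra. }
set E := exp u.
have hE : X ^ 3 * (1 + (u - u0)) <= E.
{ unfold E. have ee := exp_plus u0 (u - u0). replace (u0 + (u - u0)) with u in ee by ring.
  rewrite ee.
  have e0 : exp u0 = X ^ 3.
  { unfold u0. replace 3 with (INR 3) by (simpl; lra). rewrite exp_nat exp_ln; lra. }
  rewrite e0. apply Rmult_le_compat_l. have : 0 < X ^ 3 by apply pow_lt; lra. lra.
  apply exp_ineq1_le. }
have hln : 36 * ln X <= 11 * X.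
{ have e : ln X = ln (X / 12) + ln 12.
  { rewrite -ln_mult. f_equal; field. all: try lra. }
  have := ln_le_lin (X/12) ltac:(apply Rdiv_lt_0_compat; lra).
  have := ln12. lra. }
have key : 12 * P * X <= 11 * E.
{ have hPu : P = u * X by unfold u; field; lra.
  rewrite hPu.
  have a1 : u <= u0 * (1 + (u - u0)) by nra.
  have a2 : 12 * u0 <= 11 * X by unfold u0; lra.
  have hX3 : X ^ 3 = X * X * X by simpl; ring.
  rewrite hX3 in hE.
  have hX2 : 0 <= X * X by nra.
  have : 12 * (u * X) * X <= 12 * u0 * (1 + (u - u0)) * (X * X).
  { have : 12 * (X * X) * u <= 12 * (X * X) * (u0 * (1 + (u - u0))).
    { apply Rmult_le_compat_l; nra. }
    nra. }
  have : 12 * u0 * (1 + (u - u0)) * (X * X) <= 11 * X * (1 + (u - u0)) * (X * X).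
  { have : 0 <= (1 + (u - u0)) * (X * X) by nra. nra. }
  nra. }
have hE0 : 0 < E by apply exp_pos.
have hinv : 0 < 1/X <= 1/12.
{ split. apply Rdiv_lt_0_compat; lra. unfold Rdiv; rewrite !Rmult_1_l. apply Rinv_le_contravar; lra. }
have hprod : ((1 - 1/X) * exp (1/X)) ^ rho <= 1.
{ apply Rle_trans with (1 ^ rho); last by rewrite pow1; lra. apply pow_incr. split.
  - have := exp_pos (1/X). have : 0 <= 1 - 1/X.
    { lra. }
    intros; apply Rmult_le_pos; lra.
  - have e1 := exp_ineq1_le (- (1/X)).
    have e2 : exp (- (1/X)) * exp (1/X) = 1 by rewrite -exp_plus; replace (- (1/X) + 1/X) with 0 by ring; apply exp_0.
    have := exp_pos (1/X). nra. }
have hEq : E = exp (1/X) ^ rho.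
{ unfold E, u, P. rewrite -exp_nat. f_equal. field. lra. }
have hXm : (X - 1) ^ rho = X ^ rho * (1 - 1/X) ^ rho.
{ rewrite -Rpow_mult_distr. f_equal. field. lra. }
rewrite hXm.
have hXr : 0 < X ^ rho by apply pow_lt; lra.
apply (Rmult_le_reg_r E); [lra|].
have : (1 - 1/X) ^ rho * E <= 1.
{ rewrite hEq -Rpow_mult_distr. exact hprod. }
have hP0 : 0 <= P by apply pos_INR.
have : 0 <= (1 - 1/X) ^ rho.
{ apply pow_le. lra. }
intros.
have : 12 * P * X * (X ^ rho * (1 - 1 / X) ^ rho) * E = (12 * P * X) * X ^ rho * ((1 - 1/X)^rho * E) by ring.
intros ->.
have h0 : 0 <= 12 * P * X * X ^ rho.
{ apply Rmult_le_pos; [|lra]. apply Rmult_le_pos; [|lra]. lra. }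
have h2 : 12 * P * X * X ^ rho * ((1 - 1 / X) ^ rho * E) <= 12 * P * X * X ^ rho.
{ rewrite -{2}(Rmult_1_r (12 * P * X * X ^ rho)). apply Rmult_le_compat_l; lra. }
have h3 : 12 * P * X * X ^ rho <= 11 * E * X ^ rho.
{ apply Rmult_le_compat_r; lra. }
lra.
Qed.

Lemma num_k1 (rho : nat) : is_rho 1 rho -> 12 * INR rho * 5 * 4 ^ rho <= 11 * 5 ^ rho.
Proof.
intros [h1 _].
have : 24 < INR rho.
{ have := ln6. replace (INR (6*1)) with 6 in h1 by (simpl; lra).
  replace (INR 18 * INR 1) with 18 in h1 by (simpl; lra). lra. }
intro h.
have hr : (24 < rho)%coq_nat.
{ apply INR_lt. replace (INR 24) with 24 by (simpl; lra). exact h. }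
clear h h1.
have [j ->] : exists j, rho = (25 + j)%coq_nat by exists (rho - 25)%coq_nat; lia.
clear hr. induction j as [|j IH].
- rewrite Nat.add_0_r. replace (INR 25) with 25 by (simpl; lra). simpl. lra.
- rewrite Nat.add_succ_r S_INR.
  rewrite -(tech_pow_Rmult 4 (25+j)%coq_nat) -(tech_pow_Rmult 5 (25+j)%coq_nat).
  have h4 : 0 <= 4 ^ (25 + j) by apply pow_le; lra.
  have hP : 25 <= INR (25 + j). { replace 25 with (INR 25) by (simpl; lra). apply le_INR. lia. }
  set P := INR (25 + j) in IH hP *. set Q := 4 ^ (25 + j) in IH h4 *.
  have : 12 * (P + 1) * 5 * (4 * Q) <= 5 * (12 * P * 5 * Q) by nra.
  lra.
Qed.

Lemma num_nat (k rho : nat) : (1 <= k)%coq_nat -> is_rho k rho ->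
  exists m, (6 * k - 1 <= m)%coq_nat /\ (0 < m)%coq_nat /\
    (12 * rho * m * Nat.pow (m - 1) rho <= 11 * Nat.pow m rho)%coq_nat.
Proof.
intros hk hr.
destruct (Nat.lt_ge_cases 1 k) as [hk2|hk2].
- exists (6 * k)%nat; split; [lia|split; [lia|]].
  have h := @num_k2 k rho ltac:(lia) hr.
  apply INR_le.
  rewrite !mult_INR !pow_INR minus_INR; last by lia.
  replace (INR 12) with 12 by (simpl; lra).
  replace (INR 11) with 11 by (simpl; lra).
  replace (INR 1) with 1 by (simpl; lra).
  rewrite -!mult_INR. exact h.
- have ek : k = 1%nat by lia. subst k.
  exists 5%nat; split; [lia|split; [lia|]].
  have h := @num_k1 rho hr.
  apply INR_le.
  rewrite !mult_INR !pow_INR.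
  replace (INR 12) with 12 by (simpl; lra).
  replace (INR 11) with 11 by (simpl; lra).
  replace (INR 5) with 5 by (simpl; lra).
  replace (INR (5 - 1)) with 4 by (simpl; lra).
  exact h.
Qed.
End NumR.

Lemma expn_pow (m n : nat) : m ^ n = Nat.pow m n.
Proof. elim: n => [|n IH] //. by rewrite expnS IH mulnE. Qed.

Lemma numeric (k rho : nat) : 1 <= k -> is_rho k rho ->
  exists m, [/\ 6 * k - 1 <= m, 0 < m & 12 * rho * m * (m - 1) ^ rho <= 11 * m ^ rho].
Proof.
move=> hk hr.
have [m [h1 [h2 h3]]] := @NumR.num_nat k rho ltac:(apply/leP; exact hk) hr.
exists m; split.
- lia.
- lia.
- rewrite !expn_pow. move: h3. set p1 := Nat.pow _ _. set p2 := Nat.pow _ _. move=> h3. lia.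
Qed.

Set Implicit Arguments. Unset Strict Implicit. Unset Printing Implicit Defensive.


Definition dist (N x y : nat) := if x <= y then y - x else y + N - x.
Lemma dist_spec N x y : (x <= y /\ dist N x y = y - x) \/ (y < x /\ dist N x y = y + N - x).
Proof. rewrite /dist; case: leqP => h; [left|right]; split => //. Qed.

Lemma cint_dist N (x q : 'I_N) (y : nat) : y < N ->
  (q \in cint N x y) = (dist N x q <= dist N x y).
Proof.
move=> hy. rewrite inE. have := dist_spec N x q. have := dist_spec N x y.
have := ltn_ord x. have := ltn_ord q.
move=> h1 h2 h3 h4. case: (leqP x y) => h /=; apply/idP/idP => H; lia.
Qed.

Lemma modS N q : q < N -> (q.+1 < N /\ q.+1 %% N = q.+1) \/ (q.+1 = N /\ q.+1 %% N = 0).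
Proof.
move=> h. case: (ltnP q.+1 N) => h2.
- left; split => //. by rewrite modn_small.
- right. have e : q.+1 = N by lia. split => //. by rewrite e modnn.
Qed.

Lemma rstate_lt (V : finType) N (v : nat -> V) H a tau :
  a < N -> rstate N v H a tau < N.
Proof.
move=> ha. elim: tau => [|tau IH] //=. case: ifP => _ //.
have := @modS N _ IH. lia.
Qed.

Definition ell (V : finType) N (v : nat -> V) H a tau := dist N a (rstate N v H a tau).

Definition moved (V : finType) N (v : nat -> V) (H : nat -> {set {set V}}) a tau : bool :=
  [set v (rstate N v H a tau); v (rstate N v H a tau).+1] \in H tau.+1.

Lemma ell_step (V : finType) N (v : nat -> V) H a tau : a < N ->
  ell N v H a tau + 1 < N ->
  ell N v H a tau.+1 = ell N v H a tau + moved N v H a tau.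
Proof.
move=> ha. rewrite /ell /moved /=.
have hq := rstate_lt v H tau ha.
set q := rstate N v H a tau in hq *.
case: ifP => _ /=; last by rewrite addn0.
have := modS hq. have := dist_spec N a q. have := dist_spec N a (q.+1 %% N). lia.
Qed.

Lemma ell_le (V : finType) N (v : nat -> V) H a tau : a < N -> tau < N ->
  ell N v H a tau <= tau.
Proof.
move=> ha. elim: tau => [|tau IH] ht.
- rewrite /ell /= /dist leqnn subnn //.
- rewrite ell_step //; last by have := IH (ltnW ht); lia.
  have := IH (ltnW ht). case: (moved _ _ _ _ _) => /=; lia.
Qed.

Lemma ell_mono (V : finType) N (v : nat -> V) H a tau : a < N -> tau.+1 < N ->
  ell N v H a tau <= ell N v H a tau.+1.
Proof.
move=> ha ht. rewrite ell_step //; first by lia.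
have := ell_le v H ha (ltnW ht). lia.
Qed.

Lemma visited_arc (V : finType) N (v : nat -> V) H (a q : 'I_N) tau :
  (q \in visited v H a tau) = (dist N a q <= ell N v H a tau).
Proof. rewrite /visited cint_dist //. exact: rstate_lt. Qed.

Lemma arc_split N (x p q : nat) L : x < N -> p < N -> q < N -> L < N ->
  dist N x q <= L ->
  (dist N x p <= L) = ((dist N p q <= dist N x q) || (dist N q p <= L - dist N x q)).
Proof.
move=> hx hp hq hL hxq.
have := dist_spec N x p. have := dist_spec N x q. have := dist_spec N p q. have := dist_spec N q p.
move=> h1 h2 h3 h4.
apply/idP/idP => H; lia.
Qed.


Lemma reducesP N (D : 'I_N -> {set 'I_N}) A A' : reduces D A A' ->
  [/\ A' \subset A, \bigcup_(b in A') D b = \bigcup_(b in A) D b &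
      forall a, a \in A' -> ~~ (D a \subset \bigcup_(b in A' :\ a) D b)].
Proof.
elim => {A A'} [A h | A a A' ha hsub _ [IH1 IH2 IH3]].
- by split.
- split => //.
  + apply: subset_trans IH1 _. exact: subD1set.
  + rewrite IH2 [in RHS](bigD1 a) //=.
    have -> : \bigcup_(b in A :\ a) D b = \bigcup_(i in A | i != a) D i.
      by apply: eq_bigl => i; rewrite !inE andbC.
    apply/esym/setUidPr. apply: subset_trans hsub _.
    apply/subsetP => x /bigcupP [i hi hx]. apply/bigcupP; exists i => //.
    by move: hi; rewrite !inE andbC.
Qed.


Lemma run_facts (V : finType) N (v : nat -> V) H t (As : nat -> {set 'I_N}) :
  t < N -> roundabout_run v H t As ->
  [/\ (forall tau tau', tau <= tau' <= t -> As tau' \subset As tau),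
      (forall tau, tau <= t -> \bigcup_(a in As tau) visited v H a tau = setT) &
      (forall tau a, 0 < tau <= t -> a \in As tau ->
          ~~ (visited v H a tau \subset \bigcup_(b in As tau :\ a) visited v H b tau))].
Proof.
move=> htN [h0 hstep].
have sub1 : forall tau, 0 < tau <= t -> As tau \subset As tau.-1.
  by move=> tau ht; have [] := reducesP (hstep tau ht).
split.
- move=> tau tau' /andP [h1 h2]. elim: tau' h1 h2 => [|tau' IH] h1 h2.
  + have -> : tau = 0 by lia. exact: subxx.
  + case: (leqP tau tau') => h3.
    * apply: subset_trans (IH h3 (ltnW h2)). exact: (sub1 tau'.+1 (andb_true_intro (conj isT h2))).
    * have -> : tau = tau'.+1 by lia. exact: subxx.
- elim => [|tau IH] ht.
  + rewrite h0. apply/setP => q. rewrite !inE. apply/bigcupP. exists q; first by rewrite inE.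
    by rewrite visited_arc /ell /=.
  + have [_ e _] := reducesP (hstep tau.+1 (andb_true_intro (conj isT ht))).
    rewrite e /=. apply/eqP; rewrite eqEsubset subsetT /=. rewrite -(IH (ltnW ht)).
    apply/subsetP => q /bigcupP [a ha hq]. apply/bigcupP; exists a => //.
    move: hq. rewrite !visited_arc. move=> hq. apply: leq_trans hq _.
    apply: ell_mono => //. lia.
- move=> tau a ht ha. have [_ _ h] := reducesP (hstep tau ht). exact: h.
Qed.


Lemma arc_sub N (x y s q : nat) : x < N -> y < N -> s < N -> q < N ->
  dist N y s <= dist N x s -> dist N y q <= dist N y s -> dist N x q <= dist N x s.
Proof.
move=> *. have := dist_spec N x s. have := dist_spec N y s.
have := dist_spec N x q. have := dist_spec N y q. lia.
Qed.

Lemma run_distinct (V : finType) N (v : nat -> V) H t (As : nat -> {set 'I_N}) tau (a a' : 'I_N) :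
  t < N -> roundabout_run v H t As -> tau <= t -> a \in As tau -> a' \in As tau ->
  rstate N v H a tau = rstate N v H a' tau -> a = a'.
Proof.
move=> htN hrun ht ha ha' e.
case: tau ht ha ha' e => [|tau] ht ha ha' e; first by apply: val_inj.
have [_ _ irr] := run_facts htN hrun.
apply/eqP/negPn/negP => hne.
have hs := rstate_lt v H tau.+1 (ltn_ord a).
have [s es] : exists s, rstate N v H a tau.+1 = s by eexists.
rewrite es in e hs.
move: es e.
wlog hle : a a' ha ha' hne / dist N a' s <= dist N a s.
  move=> W es e. case: (leqP (dist N a' s) (dist N a s)) => h; first exact: (W a a').
  apply: (W a' a ha' ha _ (ltnW h) (esym e) (esym es)). by rewrite eq_sym.
move=> e' e.
apply: (negP (irr tau.+1 a' (andb_true_intro (conj isT ht)) ha')).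
apply/subsetP => q hq. apply/bigcupP. exists a.
  by rewrite !inE hne.
move: hq; rewrite !visited_arc /ell -e e' => hq.
exact: (arc_sub (ltn_ord a) (ltn_ord a') hs (ltn_ord q) hle hq).
Qed.

Lemma arcs_le2 N (B : {set 'I_N}) (D : 'I_N -> {set 'I_N}) (L : 'I_N -> nat) :
  (forall x, L x < N) -> (forall x p, (p \in D x) = (dist N x p <= L x)) ->
  (forall a, a \in B -> ~~ (D a \subset \bigcup_(b in B :\ a) D b)) ->
  forall q : 'I_N, #|[set x in B | q \in D x]| <= 2.
Proof.
move=> hL hD irr q.
pose al x := dist N x q. pose be x := L x - al x.
have key : forall x y z, x \in B -> y \in B -> z \in B -> y != x -> z != x ->
   q \in D y -> q \in D z -> q \in D x ->
   (al x <= al y) || (al x <= al z) -> (be x <= be y) || (be x <= be z) -> False.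
{ move=> x y z hx hy hz hyx hzx qy qz qx h1 h2.
  apply: (negP (irr x hx)). apply/subsetP => p.
  rewrite hD (@arc_split N x p q (L x)) //; last by rewrite -hD.
  move=> hp.
  have ok : forall w, w \in B -> w != x -> q \in D w ->
     (dist N p q <= al w) || (dist N q p <= be w) -> p \in \bigcup_(b in B :\ x) D b.
  { move=> w hw hwx qw hpw. apply/bigcupP; exists w; first by rewrite !inE hwx.
    rewrite hD (@arc_split N w p q (L w)) //. by rewrite -hD. }
  case: (leqP (al z) (al y)) => hay; case: (leqP (be z) (be y)) => hby.
  - apply: (ok y) => //. rewrite /be /al in h1 h2 hay hby *. move: hp. lia.
  - case/orP: hp => hp.
    + apply: (ok y) => //. rewrite /be /al in h1 h2 hay hby *. lia.
    + apply: (ok z) => //. rewrite /be /al in h1 h2 hay hby *. lia.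
  - case/orP: hp => hp.
    + apply: (ok z) => //. rewrite /be /al in h1 h2 hay hby *. lia.
    + apply: (ok y) => //. rewrite /be /al in h1 h2 hay hby *. lia.
  - apply: (ok z) => //. rewrite /be /al in h1 h2 hay hby *. move: hp. lia. }
rewrite leqNgt. apply/negP => /card_gt2P [x [y [z [[hx hy hz] [nxy nyz nzx]]]]].
move: hx hy hz; rewrite !inE => /andP [hx qx] /andP [hy qy] /andP [hz qz].
have K1 := key x y z hx hy hz. have K2 := key y x z hy hx hz. have K3 := key z x y hz hx hy.
have [c1|c1] := boolP (((al x <= al y) || (al x <= al z)) && ((be x <= be y) || (be x <= be z))).
  by case/andP: c1 => c c'; apply: K1 => //; rewrite eq_sym.
have [c2|c2] := boolP (((al y <= al x) || (al y <= al z)) && ((be y <= be x) || (be y <= be z))).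
  by case/andP: c2 => c c'; apply: K2 => //; rewrite eq_sym.
have [c3|c3] := boolP (((al z <= al x) || (al z <= al y)) && ((be z <= be x) || (be z <= be y))).
  by case/andP: c3 => c c'; apply: K3 => //; rewrite eq_sym.
move: c1 c2 c3. rewrite /be /al. clear. lia.
Qed.


Lemma modD_small N x j : x < N -> j < N ->
  (x + j < N /\ (x + j) %% N = x + j) \/ (N <= x + j /\ (x + j) %% N = x + j - N).
Proof.
move=> hx hj. case: (ltnP (x + j) N) => h.
- left; split => //; exact: modn_small.
- right; split => //. have e : x + j = (x + j - N) + N by lia.
  rewrite {1}e modnDr modn_small //. lia.
Qed.

Lemma card_arc N (x : 'I_N) L (D : {set 'I_N}) : L < N ->
  (forall p, (p \in D) = (dist N x p <= L)) -> L.+1 <= #|D|.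
Proof.
move=> hL hD.
have hN : 0 < N by have := ltn_ord x; lia.
pose f (j : 'I_L.+1) : 'I_N := insubd x ((x + j) %% N).
have fv : forall j : 'I_L.+1, val (f j) = (x + j) %% N.
  by move=> j; rewrite /f val_insubd ltn_pmod.
have fd : forall j : 'I_L.+1, dist N x (f j) = j.
  move=> j; rewrite fv. have hj := ltn_ord j. have hjN : j < N by lia.
  have := modD_small (ltn_ord x) hjN.
  have := dist_spec N x ((x + j) %% N). lia.
have finj : injective f.
  move=> j1 j2 e. have h1 := fd j1. have h2 := fd j2. rewrite e in h1.
  apply: ord_inj. by rewrite -h1 -h2.
have <- : #|f @: [set: 'I_L.+1]| = L.+1 by rewrite card_imset // cardsT card_ord.
apply: subset_leq_card. apply/subsetP => p /imsetP [j _ ->]. rewrite hD fd.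
by have := ltn_ord j.
Qed.

Lemma cardE_sum (T : finType) (A : {set T}) : #|A| = \sum_p (p \in A).
Proof. rewrite -sum1_card big_mkcond. apply: eq_bigr => p _. by case: (p \in A). Qed.

Lemma arcs_sum N (B : {set 'I_N}) (D : 'I_N -> {set 'I_N}) (L : 'I_N -> nat) :
  (forall x, L x < N) -> (forall x p, (p \in D x) = (dist N x p <= L x)) ->
  (forall a, a \in B -> ~~ (D a \subset \bigcup_(b in B :\ a) D b)) ->
  \sum_(x in B) (L x).+1 <= 2 * N.
Proof.
move=> hL hD irr.
apply: (@leq_trans (\sum_(x in B) #|D x|)).
  apply: leq_sum => x _. apply: card_arc; [exact: hL | exact: hD x].
have -> : \sum_(x in B) #|D x| = \sum_(p : 'I_N) #|[set x in B | p \in D x]|.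
  under eq_bigr do rewrite cardE_sum.
  rewrite exchange_big /=. apply: eq_bigr => p _. rewrite cardE_sum big_mkcond /=.
  apply: eq_bigr => x _. rewrite inE. by case: (x \in B).
apply: (@leq_trans (\sum_(p : 'I_N) 2)).
  apply: leq_sum => p _. exact: arcs_le2 hL hD irr p.
by rewrite sum_nat_const card_ord mulnC.
Qed.

Lemma card_bigcup_seq (I : Type) (T : finType) (r : seq I) (P : pred I) (F : I -> {set T}) :
  #|\bigcup_(i <- r | P i) F i| <= \sum_(i <- r | P i) #|F i|.
Proof.
elim/big_rec2: _ => [|i n S _ h]; first by rewrite cards0.
rewrite cardsU. apply: leq_trans (leq_subr _ _) _. by rewrite leq_add2l.
Qed.

Lemma tour_blocked (V : finType) (T : {set {set V}}) r v (Hs : {set {set V}}) k :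
  is_dfs_tour T r v -> deficient T k Hs ->
  #|[set q : 'I_(tourlen V) | [set v q; v q.+1] \notin Hs]| <= 2 * k.
Proof.
move=> [_ _ hT h2] hdef.
apply: (@leq_trans #|\bigcup_(e in T :\: Hs) [set q : 'I_(tourlen V) | [set v q; v q.+1] == e]|).
  apply: subset_leq_card. apply/subsetP => q. rewrite inE => hq.
  apply/bigcupP. exists [set v q; v q.+1]; last by rewrite inE.
  by rewrite inE hq hT.
apply: leq_trans (card_bigcup_seq _ _ _) _.
rewrite big_mkcond /=.
apply: (@leq_trans (\sum_(e : {set V}) (if e \in T :\: Hs then 2 else 0))).
  apply: leq_sum => e _. case: ifP => //. rewrite inE => /andP [_ he]. by rewrite h2.
rewrite -big_mkcond /= sum_nat_const. rewrite /deficient in hdef. by rewrite mulnC leq_pmul2l.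
Qed.


Lemma run_card (V : finType) (T : {set {set V}}) r v H t k
    (As : nat -> {set 'I_(tourlen V)}) :
  0 < t -> t < tourlen V -> is_dfs_tour T r v ->
  (forall tau, 0 < tau <= t -> deficient T k (H tau)) ->
  roundabout_run v H t As ->
  #|As t| * t.+1 <= 2 * tourlen V + 2 * k * t.
Proof.
move=> ht0 htN htour hdef hrun.
have [hsub hcov hirr] := run_facts htN hrun.
set B := As t.
have blocked : forall tau, tau < t ->
    #|[set a in B | ~~ moved (tourlen V) v H a tau]| <= 2 * k.
{ move=> tau ht.
  pose pos (a : 'I_(tourlen V)) : 'I_(tourlen V) := insubd a (rstate (tourlen V) v H a tau).
  have posv : forall a : 'I_(tourlen V), val (pos a) = rstate (tourlen V) v H a tau.
    by move=> a; rewrite /pos val_insubd rstate_lt.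
  have hBsub : B \subset As tau by apply: hsub; rewrite ltnW //= leqnn.
  rewrite -(@card_in_imset _ _ pos).
  - apply: leq_trans (tour_blocked (Hs := H tau.+1) htour (hdef tau.+1 _)); last by rewrite /= ht.
    apply: subset_leq_card. apply/subsetP => q /imsetP [a ha ->].
    rewrite inE in ha. case/andP: ha => _ hm.
    rewrite inE posv. exact: hm.
  - move=> a a'. rewrite !inE => /andP [ha _] /andP [ha' _] e.
    apply: (run_distinct htN hrun (ltnW ht) (subsetP hBsub a ha) (subsetP hBsub a' ha')).
    by rewrite -!posv e. }
have cntB : forall tau, tau < t ->
    \sum_(a in B) moved (tourlen V) v H a tau + #|[set a in B | ~~ moved (tourlen V) v H a tau]| = #|B|.
{ move=> tau _. rewrite cardE_sum (cardE_sum B) big_mkcond /=.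
  rewrite -big_split /=. apply: eq_bigr => a _. rewrite inE. by case: (a \in B); case: (moved _ _ _ _ _). }
have sums : forall tau, tau <= t -> tau * #|B| <= \sum_(a in B) ell (tourlen V) v H a tau + 2 * k * tau.
{ elim => [|tau IH] ht; first by rewrite mul0n.
  have e : \sum_(a in B) ell (tourlen V) v H a tau.+1 =
           \sum_(a in B) ell (tourlen V) v H a tau + \sum_(a in B) moved (tourlen V) v H a tau.
  { rewrite -big_split /=. apply: eq_bigr => a _. apply: ell_step => //.
    have := ell_le v H (ltn_ord a) (ltn_trans ht htN). lia. }
  rewrite e. have := IH (ltnW ht). have := cntB tau ht. have := blocked tau ht. lia. }
have arcs : \sum_(a in B) (ell (tourlen V) v H a t).+1 <= 2 * (tourlen V).
{ apply: (@arcs_sum (tourlen V) B (fun a => visited v H a t) (fun a => ell (tourlen V) v H a t)).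
  - move=> a. have := ell_le v H (ltn_ord a) htN. lia.
  - move=> a p. exact: visited_arc.
  - move=> a ha. apply: hirr => //. by rewrite ht0 leqnn. }
have e1 : \sum_(a in B) (ell (tourlen V) v H a t).+1 = \sum_(a in B) ell (tourlen V) v H a t + #|B|.
  by rewrite -sum1_card -big_split /=; apply: eq_bigr => a _; rewrite addn1.
have := sums t (leqnn t). lia.
Qed.


Lemma epoch_def (V : finType) (T : {set {set V}}) k G b Delta i t :
  Delta + t <= count (fun x => deficient T k (G x)) (index_iota (b i) (b i.+1)) ->
  forall tau, 0 < tau <= t -> deficient T k (epoch_graphs T k G b Delta i tau).
Proof.
move=> hc tau /andP [h1 h2].
set fl := [seq x <- index_iota (b i + Delta) (b i.+1) | deficient T k (G x)].
have hsz : t <= size fl.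
{ rewrite /fl size_filter.
  case: (leqP (b i + Delta) (b i.+1)) => hb.
  - move: hc. rewrite /index_iota.
    have -> : b i.+1 - b i = Delta + (b i.+1 - (b i + Delta)) by lia.
    rewrite iotaD count_cat.
    have := count_size (fun x => deficient T k (G x)) (iota (b i) Delta).
    rewrite size_iota. lia.
  - have := count_size (fun x => deficient T k (G x)) (index_iota (b i) (b i.+1)).
    rewrite size_iota. lia. }
have hm : nth 0 fl tau.-1 \in fl by apply: mem_nth; rewrite prednK //; apply: leq_trans h2 hsz.
rewrite /epoch_graphs -/fl. move: hm. rewrite mem_filter. by case/andP.
Qed.

Lemma tourlen_ge2 (V : finType) : 2 <= #|V| -> 2 <= tourlen V.
Proof. rewrite /tourlen. lia. Qed.

Lemma t_lt (V : finType) k : 2 <= #|V| -> 1 <= k -> tourlen V %/ (2 * k) < tourlen V.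
Proof. move=> hV hk. apply: ltn_Pdiv; [lia | have := tourlen_ge2 hV; lia]. Qed.

Lemma epoch_card (V : finType) (T : {set {set V}}) r v k H (As : nat -> {set 'I_(tourlen V)}) :
  2 <= #|V| -> 1 <= k -> is_dfs_tour T r v ->
  (forall tau, 0 < tau <= tourlen V %/ (2 * k) -> deficient T k (H tau)) ->
  roundabout_run v H (tourlen V %/ (2 * k)) As ->
  #|As (tourlen V %/ (2 * k))| <= 6 * k - 1.
Proof.
move=> hV hk htour hdef hrun.
have htN := t_lt hV hk.
have hceil := ltn_ceil (tourlen V) (isT : 0 < 2) .
have hc := @ltn_ceil (tourlen V) (2 * k) ltac:(lia).
move: hdef hrun htN hc.
set t := tourlen V %/ (2 * k). move=> hdef hrun htN hc.
case: (posnP t) => ht0.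
- rewrite ht0. have [-> _] := hrun. rewrite cardsT card_ord. rewrite ht0 in hc. lia.
- have := run_card ht0 htN htour hdef hrun. move: hc. clear. nia.
Qed.


Lemma cover_interval N (B M : {set 'I_N}) (D : 'I_N -> {set 'I_N}) (L : 'I_N -> nat) (x y : nat) :
  (forall a, L a < N) -> (forall a p, (p \in D a) = (dist N a p <= L a)) ->
  B \subset M -> \bigcup_(a in B) D a = setT ->
  x < N -> y < N -> x != y ->
  (forall z : 'I_N, z \in M -> z \in cint_ho N x y -> val z = x) ->
  exists2 a, a \in B & cint_ho N x y \subset D a.
Proof.
move=> hL hD hBM hcov hx hy hxy hM.
pose p := if y == 0 then N.-1 else y.-1.
have hp : p < N by rewrite /p; case: eqP => hh; lia.
have hpdef : (y = 0 /\ p.+1 = N) \/ (0 < y /\ p.+1 = y) by rewrite /p; case: eqP => hh; lia.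
have : Ordinal hp \in \bigcup_(a in B) D a by rewrite hcov inE.
case/bigcupP => a ha hpa.
exists a => //.
have hA : (a \in cint_ho N x y) -> val a = x by apply: hM; exact: (subsetP hBM).
move: hpa. rewrite hD /= => hpa.
apply/subsetP => z hz. rewrite hD.
have hLa := hL a. have ha' := ltn_ord a. have hz' := ltn_ord z.
have := dist_spec N a p. have := dist_spec N a z.
case: (boolP (a \in cint_ho N x y)) => haI.
- have ax : nat_of_ord a = x := hA haI. move: haI hz. rewrite !inE. case: (leqP x y) => hxy' /=; lia.
- move: haI hz. rewrite !inE. case: (leqP x y) => hxy' /=; lia.
Qed.

Lemma intervals_prop N (M : {set 'I_N}) I : I \in intervals M ->
  I = set0 \/ exists x y : nat, [/\ x < N, y < N, x != y, I = cint_ho N x y &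
        forall z : 'I_N, z \in M -> z \in I -> val z = x].
Proof.
rewrite /intervals. set ms := sort leq _.
move=> /mapP [j]. rewrite mem_iota add0n => /andP [_ hj] ->.
set d := size ms in hj *.
have huniq : uniq ms by rewrite sort_uniq map_inj_uniq ?enum_uniq //; exact: val_inj.
have hsorted : sorted ltn ms by rewrite ltn_sorted_uniq_leq huniq sort_sorted //; exact: leq_total.
have hmem : forall n, n \in ms -> n < N.
  move=> n; rewrite mem_sort => /mapP [q _ ->]. exact: ltn_ord.
have mono : forall i1 i2, i1 < d -> i2 < d -> i1 < i2 -> nth 0 ms i1 < nth 0 ms i2.
  move=> i1 i2 h1 h2 h12. exact: (sorted_ltn_nth ltn_trans 0 hsorted).
have hj' := @modS d j hj.
case: (ltnP d 2) => hd.
- left. have ed : d = 1 by lia.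
  have -> : j.+1 %% d = j by rewrite ed modn1; lia.
  apply/setP => q. rewrite !inE leqnn /=. lia.
- right. set j' := j.+1 %% d in hj' *.
  have hj'd : j' < d by lia.
  exists (nth 0 ms j), (nth 0 ms j'). split.
  + apply: hmem. exact: mem_nth.
  + apply: hmem. exact: mem_nth.
  + case: hj' => [[e0 e]|[e0 e]].
    * have := mono j j' hj hj'd ltac:(lia). lia.
    * have := mono j' j hj'd hj ltac:(lia). lia.
  + by [].
  + move=> z hzM hz.
    have hzms : val z \in ms by rewrite mem_sort; apply/mapP; exists z => //; rewrite mem_enum.
    have hi := index_mem (val z) ms. rewrite hzms in hi.
    have ez : nth 0 ms (index (val z) ms) = nat_of_ord z := nth_index 0 hzms.
    set i := index (val z) ms in hi ez.
    change (nat_of_ord z = nth 0 ms j).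
    move: hz. rewrite !inE -ez.
    case: (ltngtP i j) => hij.
    * have m1 := mono i j hi hj hij.
      case: hj' => [[h1 e]|[h1 e]].
      -- have m2 := mono j j' hj hj'd ltac:(lia). case: leqP => /= hh; lia.
      -- case: (posnP i) => hi0.
         ++ have ei : i = j' by lia. rewrite ei. case: leqP => /= hh; lia.
         ++ have m2 := mono j' i hj'd hi ltac:(lia). have m3 := mono j' j hj'd hj ltac:(lia).
            case: leqP => /= hh; lia.
    * have m1 := mono j i hj hi hij.
      case: hj' => [[h1 e]|[h1 e]].
      -- have m2 := mono j j' hj hj'd ltac:(lia).
         case: (ltngtP i j') => hij'.
         ++ lia.
         ++ have m3 := mono j' i hj'd hi hij'. case: leqP => /= hh; lia.
         ++ rewrite hij'. case: leqP => /= hh; lia.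
      -- have hi2 : i < d := hi. lia.
    * by rewrite hij.
Qed.


Lemma card_fam (I T : finType) (F : I -> {set T}) :
  #|[set f : {ffun I -> T} | [forall i, f i \in F i]]| = \prod_i #|F i|.
Proof.
have -> : \prod_i #|F i| = foldr muln 1 [seq #|F x| | x : I].
  by rewrite foldrE big_map big_enum.
rewrite -(card_family (fun i => mem (F i))) cardsE.
apply: eq_card => f. rewrite !inE. apply/forallP/familyP => h x; exact: h.
Qed.

Unset Implicit Arguments.

Theorem lemma12 (V : finType) (L k Delta rho : nat)
    (G : nat -> {set {set V}}) (T : {set {set V}}) (r : V) (v : nat -> V)
    (b : nat -> nat) (A : nat -> nat -> {set 'I_(tourlen V)}) :
  2 <= #|V| -> 1 <= k -> 1 <= Delta ->
  (forall tau, tau < L -> is_graph (G tau)) ->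
  is_tree T -> T \subset \bigcup_(tau < L) G tau ->
  is_dfs_tour T r v ->
  is_rho k rho ->
  b 0 = 0 -> (forall i, i < rho -> b i <= b i.+1) -> b rho <= L ->
  (forall i, i < rho ->
     Delta + tourlen V %/ (2 * k)
       <= count (fun x => deficient T k (G x)) (index_iota (b i) (b i.+1))) ->
  (forall i, i < rho ->
     roundabout_run v (epoch_graphs T k G b Delta i) (tourlen V %/ (2 * k)) (A i)) ->
  #|[set f : {ffun 'I_rho -> 'I_(tourlen V)} |
       [forall i : 'I_rho, f i \in A i (tourlen V %/ (2 * k))]]|
  <= 12 * #|[set f : {ffun 'I_rho -> 'I_(tourlen V)} |
       [forall i : 'I_rho, f i \in A i (tourlen V %/ (2 * k))] &&
       all (fun I : {set 'I_(tourlen V)} => [exists i : 'I_rho,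
                        I \subset visited v (epoch_graphs T k G b Delta i) (f i)
                                    (tourlen V %/ (2 * k))])
           (intervals (\bigcup_(i < rho) A i (tourlen V %/ (2 * k))))]|.
Proof.
move=> hV hk _ _ _ _ htour hrho _ _ _ hcnt hrun.
have htN := t_lt hV hk.
have hN2 := tourlen_ge2 hV.
move: hcnt hrun htN.
set N := tourlen V. set t := N %/ (2 * k). move=> hcnt hrun htN.
pose S (i : 'I_rho) := A i t.
pose D (i : 'I_rho) (a : 'I_N) := visited v (epoch_graphs T k G b Delta i) a t.
pose M := \bigcup_(i < rho) S i.
pose Is := intervals M.
have hdef : forall i : 'I_rho, forall tau, 0 < tau <= t ->
    deficient T k (epoch_graphs T k G b Delta i tau).
  move=> i. apply: epoch_def. exact: hcnt.
have hS : forall i : 'I_rho, #|S i| <= 6 * k - 1.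
  move=> i. apply: (epoch_card hV hk htour (hdef i)). exact: hrun.
have hcov : forall i : 'I_rho, \bigcup_(a in S i) D i a = setT.
  move=> i. have [_ h _] := run_facts htN (hrun i (ltn_ord i)). exact: h.
have hgood : forall i : 'I_rho, forall I, I \in Is -> exists2 a, a \in S i & I \subset D i a.
{ move=> i I hI.
  have hN0 : 0 < N by lia.
  case: (intervals_prop hI) => [->|[x [y [hx hy hxy eI hM]]]].
  - have : Ordinal hN0 \in \bigcup_(a in S i) D i a by rewrite hcov inE.
    case/bigcupP => a ha _. exists a => //. exact: sub0set.
  - rewrite eI. apply: (@cover_interval N (S i) M (D i) (fun a => ell N v (epoch_graphs T k G b Delta i) a t)).
    + move=> a. have := ell_le v (epoch_graphs T k G b Delta i) (ltn_ord a) htN. lia.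
    + move=> a p. exact: visited_arc.
    + exact: (bigcup_sup i (P := xpredT)).
    + exact: hcov.
    + exact: hx.
    + exact: hy.
    + exact: hxy.
    + move=> z hz hzI. apply: hM => //. by rewrite eI. }
have [m [hm1 hm0 hnum]] := @numeric k rho hk hrho.
set P := \prod_(i < rho) #|S i|.
pose good (i : 'I_rho) (I : {set 'I_N}) := [set a | I \subset D i a].
pose Miss (I : {set 'I_N}) := [set f : {ffun 'I_rho -> 'I_N} | [forall i, f i \in S i :\: good i I]].
set Q := \prod_(i < rho) (#|S i| - 1).
match goal with |- is_true (leq (card (mem (pred_of_set ?X))) (muln 12 (card (mem (pred_of_set ?Y))))) => set All : {set {ffun 'I_rho -> 'I_N}} := X; set Good : {set {ffun 'I_rho -> 'I_N}} := Y end.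
have hAll : #|All| = P by exact: (card_fam S).
have hMiss : forall I, I \in Is -> #|Miss I| <= Q.
{ move=> I hI. rewrite card_fam. apply: leq_prod => i _. rewrite cardsD.
  have [a ha hIa] := hgood i I hI.
  have : 0 < #|S i :&: good i I|. { apply/card_gt0P. exists a. by rewrite !inE ha. }
  exact: leq_sub2l. }
have hd : size Is <= rho * m.
{ rewrite /Is /intervals size_map size_iota size_sort size_map -cardE.
  apply: leq_trans (card_bigcup_seq _ _ _) _.
  apply: (@leq_trans (\sum_(i < rho) m)).
  - apply: leq_sum => i _. exact: leq_trans (hS i) hm1.
  - by rewrite sum_nat_const card_ord. }
have hcover : #|All| <= #|Good| + \sum_(I <- Is) #|Miss I|.
{ have sub : All \subset Good :|: \bigcup_(I <- Is) Miss I.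
  { apply/subsetP => f. rewrite inE => hf.
    case: (boolP (all (fun I : {set 'I_N} => [exists i : 'I_rho, I \subset D i (f i)]) Is)) => hall.
    + rewrite inE; apply/orP; left. by rewrite inE hf hall.
    + rewrite inE; apply/orP; right. move: hall => /allPn [I hI hnot].
      rewrite bigcup_seq; apply/bigcupP; exists I => //. rewrite inE. apply/forallP => i.
      rewrite !inE (forallP hf i) andbT.
      apply: contra hnot => hsub. apply/existsP; exists i. exact: hsub. }
  have c1 := subset_leq_card sub.
  have c2 : #|Good :|: \bigcup_(I <- Is) Miss I| <= #|Good| + \sum_(I <- Is) #|Miss I|.
  { rewrite cardsU. apply: leq_trans (leq_subr _ _) _. rewrite leq_add2l. exact: card_bigcup_seq. }
  exact: leq_trans c1 c2. }
have hsumMiss : \sum_(I <- Is) #|Miss I| <= size Is * Q.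
{ rewrite big_seq. apply: leq_trans (@leq_sum _ Is (fun I => I \in Is) (fun I => #|Miss I|) (fun _ => Q) hMiss) _.
  by rewrite -big_seq big_const_seq count_predT iter_addn_0 mulnC. }
have hQP : Q * m ^ rho <= (m - 1) ^ rho * P.
{ have e1 : Q * m ^ rho = \prod_(i < rho) ((#|S i| - 1) * m).
    by rewrite big_split /= prod_nat_const card_ord.
  have e2 : (m - 1) ^ rho * P = \prod_(i < rho) ((m - 1) * #|S i|).
    by rewrite big_split /= prod_nat_const card_ord.
  rewrite e1 e2. apply: leq_prod => i _. have := hS i. nia. }
have h12 : 12 * (size Is * Q) <= 11 * P.
{ have hmr : 0 < m ^ rho by rewrite expn_gt0 hm0.
  rewrite -(leq_pmul2r hmr).
  set d := size Is in hd *. set X := m ^ rho in hmr hQP hnum *. set Y := (m - 1) ^ rho in hQP hnum *.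
  have h1 : d * (Q * X) <= d * (Y * P) by rewrite leq_mul2l hQP orbT.
  have h2 : d * (Y * P) <= (rho * m) * (Y * P) by rewrite leq_mul2r hd orbT.
  have h3 : (12 * rho * m * Y) * P <= (11 * X) * P by rewrite leq_mul2r hnum orbT.
  move: h1 h2 h3. clear. nia. }
rewrite hAll in hcover *. move: hcover hsumMiss h12. clear.
set dQ := size Is * Q. move: P #|Good| (\sum_(I <- Is) #|Miss I|) dQ => a1 a2 a3 a4. lia.
Qed.
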